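(* Let $q\ge5$ be a prime power with $q\not\equiv0\pmod3$, and let $\mathfrak{A}$ be the null polarity $P(x_0,x_1,x_2,x_3)\mathfrak{A}=\boldsymbol{\pi}(x_3,-3x_2,3x_1,-x_0)$ of $\mathrm{PG}(3,q)$. Let $\ell$ be a line of $\mathrm{PG}(3,q)$ and $\ell'=\ell\mathfrak{A}$. Then the subgroup of $G_q$ fixing $\ell$ is also the subgroup of $G_q$ fixing $\ell'$.
   Context: $\boldsymbol{\pi}(c_0,c_1,c_2,c_3)$ denotes the plane $c_0x_0+c_1x_1+c_2x_2+c_3x_3=0$. The twisted cubic is $\mathcal{C}=\{P(t^3,t^2,t,1):t\in\mathbb{F}_q\}\cup\{P(1,0,0,0)\}$ and $G_q$ is the group of projectivities of $\mathrm{PG}(3,q)$ mapping $\mathcal{C}$ to itself. For a line $\ell$ through distinct points $P_1,P_2$, $\ell\mathfrak{A}$ is the line $P_1\mathfrak{A}\cap P_2\mathfrak{A}$. A subgroup fixes a line if each of its elements maps the line onto itself. *)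

(* Defs.v *)
From HB Require Import structures.
From mathcomp Require Import all_boot all_order all_algebra all_fingroup all_field.
Set Implicit Arguments. Unset Strict Implicit. Unset Printing Implicit Defensive.
Import GRing.Theory.
Local Open Scope ring_scope.

(* PG(3,q) over a finite field F with #|F| = q.  Points are nonzero row
   vectors of 'rV[F]_4 up to nonzero scalars: two nonzero vectors represent
   the same point iff their row spaces agree, (u == v)%MS.  Subspaces
   (lines, planes) are represented by matrices through their row spaces.
   A projectivity is induced by an invertible matrix A acting on row vectors
   v |-> v *m A. *)

Definition cubic_pt (F : fieldType) (t : F) : 'rV[F]_4 :=
  \row_(i < 4) t ^+ (3 - i).

Definition cubic_inf (F : fieldType) : 'rV[F]_4 :=
  \row_(i < 4) ((i : nat) == 0%N)%:R.

Definition on_cubic (F : fieldType) (v : 'rV[F]_4) : Prop :=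
  v != 0 /\ ((exists t : F, (v == cubic_pt t)%MS) \/ (v == cubic_inf F)%MS).

Definition in_Gq (F : fieldType) (A : 'M[F]_4) : Prop :=
  A \in unitmx /\ forall v : 'rV[F]_4, on_cubic v <-> on_cubic (v *m A).

(* Gram matrix of the null polarity: x *m nullJ is the coefficient vector
   (x3, -3 x2, 3 x1, -x0) of the plane P(x)A. *)
Definition nullJ (F : fieldType) : 'M[F]_4 :=
  \matrix_(i < 4, j < 4)
    (if ((i : nat) == 0%N) && ((j : nat) == 3%N) then -1
     else if ((i : nat) == 1%N) && ((j : nat) == 2%N) then 3%:R
     else if ((i : nat) == 2%N) && ((j : nat) == 1%N) then - 3%:R
     else if ((i : nat) == 3%N) && ((j : nat) == 0%N) then 1
     else 0).

Definition polar_plane (F : fieldType) (x : 'rV[F]_4) : 'M[F]_4 :=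
  kermx ((x *m nullJ F)^T).

Definition line_through (F : fieldType) (P1 P2 : 'rV[F]_4) : 'M[F]_4 :=
  (P1 + P2)%MS.

Definition polar_line (F : fieldType) (P1 P2 : 'rV[F]_4) : 'M[F]_4 :=
  (polar_plane P1 :&: polar_plane P2)%MS.

Definition fixes_sub (F : fieldType) (A L : 'M[F]_4) : bool :=
  (L *m A == L)%MS.

(* Main.v *)
Require Import Defs.
From HB Require Import structures.
From mathcomp Require Import all_boot all_order all_algebra all_fingroup all_field.
From mathcomp Require Import ring zify.
Set Implicit Arguments. Unset Strict Implicit.
Import GRing.Theory.
Local Open Scope ring_scope.
Definition i0 : 'I_4 := @Ordinal 4 0 isT.
Definition i1 : 'I_4 := @Ordinal 4 1 isT.
Definition i2 : 'I_4 := @Ordinal 4 2 isT.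
Definition i3 : 'I_4 := @Ordinal 4 3 isT.
Definition Mb {F : fieldType} (a : 'I_4 -> 'I_4 -> F) (i j : 'I_4) : F :=
  - (a i i0 * a j i3) + 3%:R * a i i1 * a j i2 - 3%:R * a i i2 * a j i1 + a i i3 * a j i0.
Definition hq {F : fieldType} (a : 'I_4 -> 'I_4 -> F) (k m : nat) : F :=
  match k, m with
  | 0, 0 => (- (a i0 i0 * a i0 i2)) + (a i0 i1 * a i0 i1)
  | 0, 1 => (- (a i0 i0 * a i1 i2)) + (2%:R * a i0 i1 * a i1 i1) + (- (a i0 i2 * a i1 i0))
  | 0, 2 => (- (a i0 i0 * a i2 i2)) + (2%:R * a i0 i1 * a i2 i1) + (- (a i0 i2 * a i2 i0)) + (- (a i1 i0 * a i1 i2)) + (a i1 i1 * a i1 i1)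
  | 0, 3 => (- (a i0 i0 * a i3 i2)) + (2%:R * a i0 i1 * a i3 i1) + (- (a i0 i2 * a i3 i0)) + (- (a i1 i0 * a i2 i2)) + (2%:R * a i1 i1 * a i2 i1) + (- (a i1 i2 * a i2 i0))
  | 0, 4 => (- (a i1 i0 * a i3 i2)) + (2%:R * a i1 i1 * a i3 i1) + (- (a i1 i2 * a i3 i0)) + (- (a i2 i0 * a i2 i2)) + (a i2 i1 * a i2 i1)
  | 0, 5 => (- (a i2 i0 * a i3 i2)) + (2%:R * a i2 i1 * a i3 i1) + (- (a i2 i2 * a i3 i0))
  | 0, 6 => (- (a i3 i0 * a i3 i2)) + (a i3 i1 * a i3 i1)
  | 1, 0 => (- (a i0 i1 * a i0 i3)) + (a i0 i2 * a i0 i2)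
  | 1, 1 => (- (a i0 i1 * a i1 i3)) + (2%:R * a i0 i2 * a i1 i2) + (- (a i0 i3 * a i1 i1))
  | 1, 2 => (- (a i0 i1 * a i2 i3)) + (2%:R * a i0 i2 * a i2 i2) + (- (a i0 i3 * a i2 i1)) + (- (a i1 i1 * a i1 i3)) + (a i1 i2 * a i1 i2)
  | 1, 3 => (- (a i0 i1 * a i3 i3)) + (2%:R * a i0 i2 * a i3 i2) + (- (a i0 i3 * a i3 i1)) + (- (a i1 i1 * a i2 i3)) + (2%:R * a i1 i2 * a i2 i2) + (- (a i1 i3 * a i2 i1))
  | 1, 4 => (- (a i1 i1 * a i3 i3)) + (2%:R * a i1 i2 * a i3 i2) + (- (a i1 i3 * a i3 i1)) + (- (a i2 i1 * a i2 i3)) + (a i2 i2 * a i2 i2)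
  | 1, 5 => (- (a i2 i1 * a i3 i3)) + (2%:R * a i2 i2 * a i3 i2) + (- (a i2 i3 * a i3 i1))
  | 1, 6 => (- (a i3 i1 * a i3 i3)) + (a i3 i2 * a i3 i2)
  | 2, 0 => (- (a i0 i0 * a i0 i3)) + (a i0 i1 * a i0 i2)
  | 2, 1 => (- (a i0 i0 * a i1 i3)) + (a i0 i1 * a i1 i2) + (a i0 i2 * a i1 i1) + (- (a i0 i3 * a i1 i0))
  | 2, 2 => (- (a i0 i0 * a i2 i3)) + (a i0 i1 * a i2 i2) + (a i0 i2 * a i2 i1) + (- (a i0 i3 * a i2 i0)) + (- (a i1 i0 * a i1 i3)) + (a i1 i1 * a i1 i2)
  | 2, 3 => (- (a i0 i0 * a i3 i3)) + (a i0 i1 * a i3 i2) + (a i0 i2 * a i3 i1) + (- (a i0 i3 * a i3 i0)) + (- (a i1 i0 * a i2 i3)) + (a i1 i1 * a i2 i2) + (a i1 i2 * a i2 i1) + (- (a i1 i3 * a i2 i0))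
  | 2, 4 => (- (a i1 i0 * a i3 i3)) + (a i1 i1 * a i3 i2) + (a i1 i2 * a i3 i1) + (- (a i1 i3 * a i3 i0)) + (- (a i2 i0 * a i2 i3)) + (a i2 i1 * a i2 i2)
  | 2, 5 => (- (a i2 i0 * a i3 i3)) + (a i2 i1 * a i3 i2) + (a i2 i2 * a i3 i1) + (- (a i2 i3 * a i3 i0))
  | 2, 6 => (- (a i3 i0 * a i3 i3)) + (a i3 i1 * a i3 i2)
  | _, _ => 0
  end.
Lemma cert_M01_0 {F : fieldType} (a : 'I_4 -> 'I_4 -> F) :
  Mb a i0 i1 * (a i0 i0) =
  (4%:R * (a i1 i1) * (hq a 0 0)) + (- (2%:R * (a i0 i1) * (hq a 0 1))) + (- (2%:R * (a i1 i0) * (hq a 2 0))) + ((a i0 i0) * (hq a 2 1)).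
Proof. rewrite /hq /Mb /=; ring. Qed.

Lemma cert_M01_1 {F : fieldType} (a : 'I_4 -> 'I_4 -> F) :
  Mb a i0 i1 * (a i0 i1) =
  (3%:R * (a i1 i2) * (hq a 0 0)) + (- ((a i0 i2) * (hq a 0 1))) + (- ((a i1 i0) * (hq a 1 0))) + ((a i0 i0) * (hq a 1 1)) + (- ((a i1 i1) * (hq a 2 0))).
Proof. rewrite /hq /Mb /=; ring. Qed.

Lemma cert_M01_2 {F : fieldType} (a : 'I_4 -> 'I_4 -> F) :
  Mb a i0 i1 * (a i0 i2) =
  ((a i1 i3) * (hq a 0 0)) + (- ((a i0 i3) * (hq a 0 1))) + (- (3%:R * (a i1 i1) * (hq a 1 0))) + ((a i0 i1) * (hq a 1 1)) + ((a i1 i2) * (hq a 2 0)).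
Proof. rewrite /hq /Mb /=; ring. Qed.

Lemma cert_M01_3 {F : fieldType} (a : 'I_4 -> 'I_4 -> F) :
  Mb a i0 i1 * (a i0 i3) =
  (- (4%:R * (a i1 i2) * (hq a 1 0))) + (2%:R * (a i0 i2) * (hq a 1 1)) + (2%:R * (a i1 i3) * (hq a 2 0)) + (- ((a i0 i3) * (hq a 2 1))).
Proof. rewrite /hq /Mb /=; ring. Qed.

Lemma cert_M23_12 {F : fieldType} (a : 'I_4 -> 'I_4 -> F) :
  Mb a i2 i3 * (a i3 i0) =
  (2%:R * (a i3 i1) * (hq a 0 5)) + (- (4%:R * (a i2 i1) * (hq a 0 6))) + (- ((a i3 i0) * (hq a 2 5))) + (2%:R * (a i2 i0) * (hq a 2 6)).
Proof. rewrite /hq /Mb /=; ring. Qed.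

Lemma cert_M23_13 {F : fieldType} (a : 'I_4 -> 'I_4 -> F) :
  Mb a i2 i3 * (a i3 i1) =
  (2%:R * (a i3 i2) * (hq a 0 5)) + (- (2%:R * (a i2 i2) * (hq a 0 6))) + (2%:R * (a i2 i0) * (hq a 1 6)) + (- ((a i3 i1) * (hq a 2 5))).
Proof. rewrite /hq /Mb /=; ring. Qed.

Lemma cert_M23_14 {F : fieldType} (a : 'I_4 -> 'I_4 -> F) :
  Mb a i2 i3 * (a i3 i2) =
  (- (2%:R * (a i2 i3) * (hq a 0 6))) + (- (2%:R * (a i3 i1) * (hq a 1 5))) + (2%:R * (a i2 i1) * (hq a 1 6)) + ((a i3 i2) * (hq a 2 5)).
Proof. rewrite /hq /Mb /=; ring. Qed.

Lemma cert_M23_15 {F : fieldType} (a : 'I_4 -> 'I_4 -> F) :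
  Mb a i2 i3 * (a i3 i3) =
  (- (2%:R * (a i3 i2) * (hq a 1 5))) + (4%:R * (a i2 i2) * (hq a 1 6)) + ((a i3 i3) * (hq a 2 5)) + (- (2%:R * (a i2 i3) * (hq a 2 6))).
Proof. rewrite /hq /Mb /=; ring. Qed.

Lemma cert_M02_0_0 {F : fieldType} (a : 'I_4 -> 'I_4 -> F) :
  Mb a i0 i2 * (a i0 i0 * a i0 i0) =
  (4%:R * (a i0 i0 * a i2 i1) * (hq a 0 0)) + (- (2%:R * (a i1 i0 * a i1 i1) * (hq a 0 0))) + ((a i0 i0 * a i1 i1) * (hq a 0 1)) + ((a i0 i1 * a i1 i0) * (hq a 0 1)) + (- (2%:R * (a i0 i0 * a i0 i1) * (hq a 0 2))) + (- (2%:R * (a i0 i0 * a i2 i0) * (hq a 2 0))) + ((a i1 i0 * a i1 i0) * (hq a 2 0)) + (- ((a i0 i0 * a i1 i0) * (hq a 2 1))) + ((a i0 i0 * a i0 i0) * (hq a 2 2)).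
Proof. rewrite /hq /Mb /=; ring. Qed.

Lemma cert_M02_1_1 {F : fieldType} (a : 'I_4 -> 'I_4 -> F) :
  Mb a i0 i2 * (a i0 i1 * a i0 i1) =
  (3%:R * (a i0 i1 * a i2 i2) * (hq a 0 0)) + (- (3%:R * (a i0 i2 * a i2 i1) * (hq a 0 0))) + ((a i0 i3 * a i2 i0) * (hq a 0 0)) + (- (2%:R * (a i1 i1 * a i1 i2) * (hq a 0 0))) + ((a i0 i1 * a i1 i2) * (hq a 0 1)) + (- ((a i0 i0 * a i0 i3) * (hq a 0 2))) + (- (3%:R * (a i0 i0 * a i2 i1) * (hq a 1 0))) + (- ((a i0 i0 * a i1 i1) * (hq a 1 1))) + ((a i0 i0 * a i0 i1) * (hq a 1 2)) + ((a i0 i0 * a i2 i2) * (hq a 2 0)) + ((a i1 i0 * a i1 i2) * (hq a 2 0)).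
Proof. rewrite /hq /Mb /=; ring. Qed.

Lemma cert_M02_2_2 {F : fieldType} (a : 'I_4 -> 'I_4 -> F) :
  Mb a i0 i2 * (a i0 i2 * a i0 i2) =
  (3%:R * (a i0 i3 * a i2 i2) * (hq a 0 0)) + ((a i0 i3 * a i1 i2) * (hq a 0 1)) + (- ((a i0 i2 * a i0 i3) * (hq a 0 2))) + (- ((a i0 i0 * a i2 i3) * (hq a 1 0))) + (3%:R * (a i0 i1 * a i2 i2) * (hq a 1 0)) + (- (3%:R * (a i0 i2 * a i2 i1) * (hq a 1 0))) + (2%:R * (a i1 i1 * a i1 i2) * (hq a 1 0)) + (- ((a i0 i2 * a i1 i1) * (hq a 1 1))) + ((a i0 i0 * a i0 i3) * (hq a 1 2)) + (- ((a i0 i3 * a i2 i1) * (hq a 2 0))) + (- ((a i1 i1 * a i1 i3) * (hq a 2 0))).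
Proof. rewrite /hq /Mb /=; ring. Qed.

Lemma cert_M02_3_3 {F : fieldType} (a : 'I_4 -> 'I_4 -> F) :
  Mb a i0 i2 * (a i0 i3 * a i0 i3) =
  (- (4%:R * (a i0 i3 * a i2 i2) * (hq a 1 0))) + (2%:R * (a i1 i2 * a i1 i3) * (hq a 1 0)) + (- ((a i0 i2 * a i1 i3) * (hq a 1 1))) + (- ((a i0 i3 * a i1 i2) * (hq a 1 1))) + (2%:R * (a i0 i2 * a i0 i3) * (hq a 1 2)) + (2%:R * (a i0 i3 * a i2 i3) * (hq a 2 0)) + (- ((a i1 i3 * a i1 i3) * (hq a 2 0))) + ((a i0 i3 * a i1 i3) * (hq a 2 1)) + (- ((a i0 i3 * a i0 i3) * (hq a 2 2))).
Proof. rewrite /hq /Mb /=; ring. Qed.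

Lemma cert_M13_12_12 {F : fieldType} (a : 'I_4 -> 'I_4 -> F) :
  Mb a i1 i3 * (a i3 i0 * a i3 i0) =
  (2%:R * (a i3 i0 * a i3 i1) * (hq a 0 4)) + (- ((a i2 i0 * a i3 i1) * (hq a 0 5))) + (- ((a i2 i1 * a i3 i0) * (hq a 0 5))) + (- (4%:R * (a i1 i1 * a i3 i0) * (hq a 0 6))) + (2%:R * (a i2 i0 * a i2 i1) * (hq a 0 6)) + (- ((a i3 i0 * a i3 i0) * (hq a 2 4))) + ((a i2 i0 * a i3 i0) * (hq a 2 5)) + (2%:R * (a i1 i0 * a i3 i0) * (hq a 2 6)) + (- ((a i2 i0 * a i2 i0) * (hq a 2 6))).
Proof. rewrite /hq /Mb /=; ring. Qed.

Lemma cert_M13_13_13 {F : fieldType} (a : 'I_4 -> 'I_4 -> F) :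
  Mb a i1 i3 * (a i3 i1 * a i3 i1) =
  (2%:R * (a i3 i1 * a i3 i2) * (hq a 0 4)) + (- ((a i2 i1 * a i3 i2) * (hq a 0 5))) + ((a i1 i0 * a i3 i3) * (hq a 0 6)) + (- ((a i1 i1 * a i3 i2) * (hq a 0 6))) + (- (3%:R * (a i1 i2 * a i3 i1) * (hq a 0 6))) + ((a i1 i3 * a i3 i0) * (hq a 0 6)) + ((a i2 i0 * a i2 i3) * (hq a 0 6)) + ((a i2 i0 * a i3 i1) * (hq a 1 5)) + (2%:R * (a i1 i0 * a i3 i1) * (hq a 1 6)) + (- ((a i2 i0 * a i2 i1) * (hq a 1 6))) + (- ((a i3 i0 * a i3 i2) * (hq a 2 4))).
Proof. rewrite /hq /Mb /=; ring. Qed.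

Lemma cert_M13_14_14 {F : fieldType} (a : 'I_4 -> 'I_4 -> F) :
  Mb a i1 i3 * (a i3 i2 * a i3 i2) =
  (- ((a i2 i3 * a i3 i2) * (hq a 0 5))) + (- (2%:R * (a i1 i3 * a i3 i2) * (hq a 0 6))) + ((a i2 i2 * a i2 i3) * (hq a 0 6)) + (- (2%:R * (a i3 i1 * a i3 i2) * (hq a 1 4))) + ((a i2 i2 * a i3 i1) * (hq a 1 5)) + (- ((a i1 i0 * a i3 i3) * (hq a 1 6))) + (3%:R * (a i1 i1 * a i3 i2) * (hq a 1 6)) + ((a i1 i2 * a i3 i1) * (hq a 1 6)) + (- ((a i1 i3 * a i3 i0) * (hq a 1 6))) + (- ((a i2 i0 * a i2 i3) * (hq a 1 6))) + ((a i3 i1 * a i3 i3) * (hq a 2 4)).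
Proof. rewrite /hq /Mb /=; ring. Qed.

Lemma cert_M13_15_15 {F : fieldType} (a : 'I_4 -> 'I_4 -> F) :
  Mb a i1 i3 * (a i3 i3 * a i3 i3) =
  (- (2%:R * (a i3 i2 * a i3 i3) * (hq a 1 4))) + ((a i2 i2 * a i3 i3) * (hq a 1 5)) + ((a i2 i3 * a i3 i2) * (hq a 1 5)) + (4%:R * (a i1 i2 * a i3 i3) * (hq a 1 6)) + (- (2%:R * (a i2 i2 * a i2 i3) * (hq a 1 6))) + ((a i3 i3 * a i3 i3) * (hq a 2 4)) + (- ((a i2 i3 * a i3 i3) * (hq a 2 5))) + (- (2%:R * (a i1 i3 * a i3 i3) * (hq a 2 6))) + ((a i2 i3 * a i2 i3) * (hq a 2 6)).
Proof. rewrite /hq /Mb /=; ring. Qed.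

Lemma cert_M12p3M03_0 {F : fieldType} (a : 'I_4 -> 'I_4 -> F) :
  (Mb a i1 i2 + 3%:R * Mb a i0 i3) * (a i0 i0) =
  (12%:R * (a i3 i1) * (hq a 0 0)) + (6%:R * (a i2 i1) * (hq a 0 1)) + (- (6%:R * (a i0 i1) * (hq a 0 3))) + (- (6%:R * (a i3 i0) * (hq a 2 0))) + (- (3%:R * (a i2 i0) * (hq a 2 1))) + (3%:R * (a i0 i0) * (hq a 2 3)) + (- ((a i2 i0) * (Mb a i0 i1))) + (- (2%:R * (a i1 i0) * (Mb a i0 i2))).
Proof. rewrite /hq /Mb /=; ring. Qed.

Lemma cert_M12p3M03_1 {F : fieldType} (a : 'I_4 -> 'I_4 -> F) :
  (Mb a i1 i2 + 3%:R * Mb a i0 i3) * (a i0 i1) =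
  (9%:R * (a i3 i2) * (hq a 0 0)) + (5%:R * (a i2 i2) * (hq a 0 1)) + ((a i1 i2) * (hq a 0 2)) + (- (3%:R * (a i0 i2) * (hq a 0 3))) + (- (3%:R * (a i3 i0) * (hq a 1 0))) + (- ((a i2 i0) * (hq a 1 1))) + ((a i1 i0) * (hq a 1 2)) + (3%:R * (a i0 i0) * (hq a 1 3)) + (- (3%:R * (a i3 i1) * (hq a 2 0))) + (- (2%:R * (a i2 i1) * (hq a 2 1))) + (- ((a i1 i1) * (hq a 2 2))) + (- ((a i2 i1) * (Mb a i0 i1))) + (- (2%:R * (a i1 i1) * (Mb a i0 i2))).
Proof. rewrite /hq /Mb /=; ring. Qed.

Lemma cert_M12p3M03_2 {F : fieldType} (a : 'I_4 -> 'I_4 -> F) :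
  (Mb a i1 i2 + 3%:R * Mb a i0 i3) * (a i0 i2) =
  (3%:R * (a i3 i3) * (hq a 0 0)) + ((a i2 i3) * (hq a 0 1)) + (- ((a i1 i3) * (hq a 0 2))) + (- (3%:R * (a i0 i3) * (hq a 0 3))) + (- (9%:R * (a i3 i1) * (hq a 1 0))) + (- (5%:R * (a i2 i1) * (hq a 1 1))) + (- ((a i1 i1) * (hq a 1 2))) + (3%:R * (a i0 i1) * (hq a 1 3)) + (3%:R * (a i3 i2) * (hq a 2 0)) + (2%:R * (a i2 i2) * (hq a 2 1)) + ((a i1 i2) * (hq a 2 2)) + (- ((a i2 i2) * (Mb a i0 i1))) + (- (2%:R * (a i1 i2) * (Mb a i0 i2))).
Proof. rewrite /hq /Mb /=; ring. Qed.

Lemma cert_M12p3M03_3 {F : fieldType} (a : 'I_4 -> 'I_4 -> F) :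
  (Mb a i1 i2 + 3%:R * Mb a i0 i3) * (a i0 i3) =
  (- (12%:R * (a i3 i2) * (hq a 1 0))) + (- (6%:R * (a i2 i2) * (hq a 1 1))) + (6%:R * (a i0 i2) * (hq a 1 3)) + (6%:R * (a i3 i3) * (hq a 2 0)) + (3%:R * (a i2 i3) * (hq a 2 1)) + (- (3%:R * (a i0 i3) * (hq a 2 3))) + (- ((a i2 i3) * (Mb a i0 i1))) + (- (2%:R * (a i1 i3) * (Mb a i0 i2))).
Proof. rewrite /hq /Mb /=; ring. Qed.

Lemma syz1 {F : fieldType} (a : 'I_4 -> 'I_4 -> F) :
  (a i0 i2 * hq a 0 1 - a i0 i1 * hq a 2 1 + a i0 i0 * hq a 1 1) + (a i1 i2 * hq a 0 0 - a i1 i1 * hq a 2 0 + a i1 i0 * hq a 1 0) = 0.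
Proof. rewrite /hq /=; ring. Qed.

Lemma syz2 {F : fieldType} (a : 'I_4 -> 'I_4 -> F) :
  (a i0 i2 * hq a 0 2 - a i0 i1 * hq a 2 2 + a i0 i0 * hq a 1 2) + (a i1 i2 * hq a 0 1 - a i1 i1 * hq a 2 1 + a i1 i0 * hq a 1 1) + (a i2 i2 * hq a 0 0 - a i2 i1 * hq a 2 0 + a i2 i0 * hq a 1 0) = 0.
Proof. rewrite /hq /=; ring. Qed.

Lemma syz3 {F : fieldType} (a : 'I_4 -> 'I_4 -> F) :
  (a i0 i2 * hq a 0 3 - a i0 i1 * hq a 2 3 + a i0 i0 * hq a 1 3) + (a i1 i2 * hq a 0 2 - a i1 i1 * hq a 2 2 + a i1 i0 * hq a 1 2) + (a i2 i2 * hq a 0 1 - a i2 i1 * hq a 2 1 + a i2 i0 * hq a 1 1) + (a i3 i2 * hq a 0 0 - a i3 i1 * hq a 2 0 + a i3 i0 * hq a 1 0) = 0.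
Proof. rewrite /hq /=; ring. Qed.

Lemma syz4 {F : fieldType} (a : 'I_4 -> 'I_4 -> F) :
  (a i0 i2 * hq a 0 4 - a i0 i1 * hq a 2 4 + a i0 i0 * hq a 1 4) + (a i1 i2 * hq a 0 3 - a i1 i1 * hq a 2 3 + a i1 i0 * hq a 1 3) + (a i2 i2 * hq a 0 2 - a i2 i1 * hq a 2 2 + a i2 i0 * hq a 1 2) + (a i3 i2 * hq a 0 1 - a i3 i1 * hq a 2 1 + a i3 i0 * hq a 1 1) = 0.
Proof. rewrite /hq /=; ring. Qed.

Lemma ord4P (j : 'I_4) : [\/ j = i0, j = i1, j = i2 | j = i3].
Proof.
case: j => [[|[|[|[|n]]]] Hn] //.
- by apply: Or41; apply: val_inj.
- by apply: Or42; apply: val_inj.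
- by apply: Or43; apply: val_inj.
- by apply: Or44; apply: val_inj.
Qed.

Lemma subst0 {F : fieldType} (x y : F) : y = 0 -> x = y -> x = 0.
Proof. by move=> -> ->. Qed.

Lemma eq_of {F : fieldType} (x z y : F) : y = 0 -> x - z = y -> x = z.
Proof. by move=> -> /eqP; rewrite subr_eq0 => /eqP. Qed.

Definition Qf {F : fieldType} (k : nat) (v0 v1 v2 v3 : F) : F :=
  match k with 0 => v1 * v1 - v0 * v2 | 1 => v2 * v2 - v1 * v3 | _ => v1 * v2 - v0 * v3 end.

Definition pt {F : fieldType} (a : 'I_4 -> 'I_4 -> F) (t : F) (j : 'I_4) : F :=
  t ^+ 3 * a i0 j + t ^+ 2 * a i1 j + t * a i2 j + a i3 j.

Lemma Qpt {F : fieldType} (a : 'I_4 -> 'I_4 -> F) (t : F) (k : nat) : (k < 3)%N ->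
  Qf k (pt a t i0) (pt a t i1) (pt a t i2) (pt a t i3) =
  hq a k 0 * t ^+ 6 + hq a k 1 * t ^+ 5 + hq a k 2 * t ^+ 4 + hq a k 3 * t ^+ 3
  + hq a k 4 * t ^+ 2 + hq a k 5 * t + hq a k 6.
Proof. by case: k => [|[|[|k]]] // _; rewrite /Qf /pt /hq /=; ring. Qed.

Lemma Qinf {F : fieldType} (a : 'I_4 -> 'I_4 -> F) (k : nat) : (k < 3)%N ->
  Qf k (a i0 i0) (a i0 i1) (a i0 i2) (a i0 i3) = hq a k 0.
Proof. by case: k => [|[|[|k]]] // _; rewrite /Qf /hq /=; ring. Qed.

Lemma cubic0 {F : fieldType} (d0 d1 d2 d3 : F) (s : seq F) : uniq s -> size s = 4%N ->
  (forall x, x \in s -> d0 + d1 * x + d2 * x ^+ 2 + d3 * x ^+ 3 = 0) ->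
  [/\ d0 = 0, d1 = 0, d2 = 0 & d3 = 0].
Proof.
move=> us ss H.
pose p := Poly [:: d0; d1; d2; d3].
have p0 : p = 0.
  apply/eqP; apply: contraT => pn0.
  have : all (root p) s.
    apply/allP => x xs; rewrite /root /p horner_Poly /=.
    by apply/eqP; apply: (subst0 (H x xs)); ring.
  move/(max_poly_roots pn0)/(_ us).
  have := size_Poly [:: d0; d1; d2; d3]; rewrite ss /= -/p.
  by move=> le lt; have := leq_trans lt le.
have c i : (Poly [:: d0; d1; d2; d3])`_i = 0 by rewrite -/p p0 coef0.
have := c 0%N; have := c 1%N; have := c 2%N; have := c 3%N.
by rewrite !coef_Poly /=.
Qed.

Lemma poly_rel {F : fieldType} (h0 h1 h2 h3 h4 h5 h6 x1 x2 x3 x4 : F) :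
  uniq [:: x1; x2; x3; x4] -> x1 != 0 -> x2 != 0 -> x3 != 0 -> x4 != 0 -> h0 = 0 ->
  (forall t, h0 * t ^+ 6 + h1 * t ^+ 5 + h2 * t ^+ 4 + h3 * t ^+ 3
    + h4 * t ^+ 2 + h5 * t + h6 = 0) ->
  [/\ h6 = 0,
      h2 = - (h1 * (x1 + x2 + x3 + x4)),
      h3 = h1 * (x1 * x2 + x1 * x3 + x1 * x4 + x2 * x3 + x2 * x4 + x3 * x4),
      h4 = - (h1 * (x1 * x2 * x3 + x1 * x2 * x4 + x1 * x3 * x4 + x2 * x3 * x4))
    & h5 = h1 * (x1 * x2 * x3 * x4)].
Proof.
move=> us n1 n2 n3 n4 e0 Hf.
have e6 : h6 = 0 by apply: (subst0 (Hf 0)); rewrite e0; ring.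
have R x : x != 0 -> h1 * x ^+ 4 + h2 * x ^+ 3 + h3 * x ^+ 2 + h4 * x + h5 = 0.
  move=> nx; have : x * (h1 * x ^+ 4 + h2 * x ^+ 3 + h3 * x ^+ 2 + h4 * x + h5) = 0.
    by apply: (subst0 (Hf x)); rewrite e0 e6; ring.
  by move/eqP; rewrite mulf_eq0 (negbTE nx) /= => /eqP.
pose D0 := h5 - h1 * (x1 * x2 * x3 * x4).
pose D1 := h4 + h1 * (x1 * x2 * x3 + x1 * x2 * x4 + x1 * x3 * x4 + x2 * x3 * x4).
pose D2 := h3 - h1 * (x1 * x2 + x1 * x3 + x1 * x4 + x2 * x3 + x2 * x4 + x3 * x4).
pose D3 := h2 + h1 * (x1 + x2 + x3 + x4).
have Hs : forall x, x \in [:: x1; x2; x3; x4] -> D0 + D1 * x + D2 * x ^+ 2 + D3 * x ^+ 3 = 0.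
  move=> x; rewrite !inE => /or4P [] /eqP ->; rewrite /D0 /D1 /D2 /D3.
  - by apply: (subst0 (R _ n1)); ring.
  - by apply: (subst0 (R _ n2)); ring.
  - by apply: (subst0 (R _ n3)); ring.
  - by apply: (subst0 (R _ n4)); ring.
have [d0 d1 d2 d3] := cubic0 us erefl Hs.
split => //.
- by apply: (eq_of d3); rewrite /D3; ring.
- by apply: (eq_of d2); rewrite /D2; ring.
- by apply: (eq_of d1); rewrite /D1; ring.
- by apply: (eq_of d0); rewrite /D0; ring.
Qed.

Definition Lf {F : fieldType} (a : 'I_4 -> 'I_4 -> F) (i : 'I_4) : F :=
  a i i2 * hq a 0 1 - a i i1 * hq a 2 1 + a i i0 * hq a 1 1.

Lemma syz_conc {F : fieldType} (a : 'I_4 -> 'I_4 -> F) (e1 e2 e3 : F) :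
  hq a 0 0 = 0 -> hq a 1 0 = 0 -> hq a 2 0 = 0 ->
  hq a 0 2 = - (hq a 0 1 * e1) -> hq a 1 2 = - (hq a 1 1 * e1) -> hq a 2 2 = - (hq a 2 1 * e1) ->
  hq a 0 3 = hq a 0 1 * e2 -> hq a 1 3 = hq a 1 1 * e2 -> hq a 2 3 = hq a 2 1 * e2 ->
  hq a 0 4 = - (hq a 0 1 * e3) -> hq a 1 4 = - (hq a 1 1 * e3) -> hq a 2 4 = - (hq a 2 1 * e3) ->
  [/\ Lf a i0 = 0, Lf a i1 = 0, Lf a i2 = 0 & Lf a i3 = 0].
Proof.
move=> H00 H10 H20 H02 H12 H22 H03 H13 H23 H04 H14 H24.
have S1 := syz1 a; have S2 := syz2 a; have S3 := syz3 a; have S4 := syz4 a.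
rewrite ?H00 ?H10 ?H20 ?H02 ?H12 ?H22 ?H03 ?H13 ?H23 ?H04 ?H14 ?H24 in S1 S2 S3 S4.
have L0 : Lf a i0 = 0 by rewrite -S1 /Lf; ring.
have L1 : Lf a i1 - e1 * Lf a i0 = 0 by rewrite -S2 /Lf; ring.
rewrite L0 mulr0 subr0 in L1.
have L2 : Lf a i2 - e1 * Lf a i1 + e2 * Lf a i0 = 0 by rewrite -S3 /Lf; ring.
rewrite L0 L1 !mulr0 subr0 addr0 in L2.
have L3 : Lf a i3 - e1 * Lf a i2 + e2 * Lf a i1 - e3 * Lf a i0 = 0 by rewrite -S4 /Lf; ring.
rewrite L0 L1 L2 !mulr0 !subr0 addr0 in L3.
by split.
Qed.

Lemma row_nz_cancel {F : fieldType} (a : 'I_4 -> 'I_4 -> F) (r : 'I_4) (g : F) :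
  (exists j, a r j != 0) -> (forall j, g * a r j = 0) -> g = 0.
Proof.
move=> [j nj] /(_ j) /eqP; rewrite mulf_eq0 (negbTE nj) orbF => /eqP //.
Qed.

Lemma row_nz_cancel2 {F : fieldType} (a : 'I_4 -> 'I_4 -> F) (r : 'I_4) (g : F) :
  (exists j, a r j != 0) -> (forall j, g * (a r j * a r j) = 0) -> g = 0.
Proof.
move=> [j nj] /(_ j) /eqP; rewrite !mulf_eq0 (negbTE nj) !orbF => /eqP //.
Qed.

Lemma alg_main {F : fieldType} (a : 'I_4 -> 'I_4 -> F) :
  (forall k m, hq a k m = 0) -> (exists j, a i0 j != 0) -> (exists j, a i3 j != 0) ->
  [/\ Mb a i0 i1 = 0, Mb a i2 i3 = 0, Mb a i0 i2 = 0, Mb a i1 i3 = 0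
    & Mb a i1 i2 + 3%:R * Mb a i0 i3 = 0].
Proof.
move=> Hz n0 n3.
have E01 : Mb a i0 i1 = 0.
  apply: (row_nz_cancel n0) => j; case: (ord4P j) => ->;
  [rewrite cert_M01_0|rewrite cert_M01_1|rewrite cert_M01_2|rewrite cert_M01_3];
  rewrite ?Hz; ring.
have E23 : Mb a i2 i3 = 0.
  apply: (row_nz_cancel n3) => j; case: (ord4P j) => ->;
  [rewrite cert_M23_12|rewrite cert_M23_13|rewrite cert_M23_14|rewrite cert_M23_15];
  rewrite ?Hz; ring.
have E02 : Mb a i0 i2 = 0.
  apply: (row_nz_cancel2 n0) => j; case: (ord4P j) => ->;
  [rewrite cert_M02_0_0|rewrite cert_M02_1_1|rewrite cert_M02_2_2|rewrite cert_M02_3_3];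
  rewrite ?Hz ?E01 ?E23; ring.
have E13 : Mb a i1 i3 = 0.
  apply: (row_nz_cancel2 n3) => j; case: (ord4P j) => ->;
  [rewrite cert_M13_12_12|rewrite cert_M13_13_13|rewrite cert_M13_14_14|rewrite cert_M13_15_15];
  rewrite ?Hz ?E01 ?E23; ring.
have EX : Mb a i1 i2 + 3%:R * Mb a i0 i3 = 0.
  apply: (row_nz_cancel n0) => j; case: (ord4P j) => ->;
  [rewrite cert_M12p3M03_0|rewrite cert_M12p3M03_1|rewrite cert_M12p3M03_2|rewrite cert_M12p3M03_3];
  rewrite ?Hz ?E01 ?E23 ?E02 ?E13; ring.
by split.
Qed.

Arguments Mb : simpl never.
Arguments hq : simpl never.

Lemma sum4 {F : fieldType} (G : 'I_4 -> F) : \sum_i G i = G i0 + G i1 + G i2 + G i3.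
Proof.
rewrite !big_ord_recl big_ord0 addr0 !addrA.
by congr (_ + _ + _ + _); apply: congr1; apply: val_inj.
Qed.

Section Mat.
End Mat.

Lemma cpt0 {F : fieldType} (s : F) : cubic_pt s 0 i0 = s ^+ 3. Proof. by rewrite mxE. Qed.
Lemma cpt1 {F : fieldType} (s : F) : cubic_pt s 0 i1 = s ^+ 2. Proof. by rewrite mxE. Qed.
Lemma cpt2 {F : fieldType} (s : F) : cubic_pt s 0 i2 = s. Proof. by rewrite mxE. Qed.
Lemma cpt3 {F : fieldType} (s : F) : cubic_pt s 0 i3 = 1. Proof. by rewrite mxE. Qed.
Lemma cinf0 {F : fieldType} : cubic_inf F 0 i0 = 1. Proof. by rewrite mxE. Qed.
Lemma cinf1 {F : fieldType} : cubic_inf F 0 i1 = 0. Proof. by rewrite mxE. Qed.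
Lemma cinf2 {F : fieldType} : cubic_inf F 0 i2 = 0. Proof. by rewrite mxE. Qed.
Lemma cinf3 {F : fieldType} : cubic_inf F 0 i3 = 0. Proof. by rewrite mxE. Qed.

Lemma ptA {F : fieldType} (A : 'M[F]_4) t j : (cubic_pt t *m A) 0 j = pt A t j.
Proof. by rewrite mxE sum4 cpt0 cpt1 cpt2 cpt3 /pt; ring. Qed.

Lemma infA {F : fieldType} (A : 'M[F]_4) j : (cubic_inf F *m A) 0 j = A i0 j.
Proof. by rewrite mxE sum4 cinf0 cinf1 cinf2 cinf3; ring. Qed.

Lemma oncQ {F : fieldType} (w : 'rV[F]_4) : on_cubic w ->
  forall k, Qf k (w 0 i0) (w 0 i1) (w 0 i2) (w 0 i3) = 0.
Proof.
move=> [_ [[s /andP[ws _]] | /andP[ws _]]] k.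
- have [c ->] := sub_rVP ws.
  have E j : (c *: cubic_pt s) 0 j = c * cubic_pt s 0 j by rewrite mxE.
  rewrite !E cpt0 cpt1 cpt2 cpt3 /Qf.
  by case: k => [|[|k]] /=; ring.
- have [c ->] := sub_rVP ws.
  have E j : (c *: cubic_inf F) 0 j = c * cubic_inf F 0 j by rewrite mxE.
  rewrite !E cinf0 cinf1 cinf2 cinf3 /Qf.
  by case: k => [|[|k]] /=; ring.
Qed.

Lemma cpt_nz {F : fieldType} (t : F) : cubic_pt t != 0.
Proof.
apply/eqP => /matrixP/(_ 0 i3); rewrite cpt3 mxE => /eqP; by rewrite oner_eq0.
Qed.

Lemma cinf_nz {F : fieldType} : cubic_inf F != 0.
Proof.
apply/eqP => /matrixP/(_ 0 i0); rewrite cinf0 mxE => /eqP; by rewrite oner_eq0.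
Qed.

Lemma on_cpt {F : fieldType} (t : F) : on_cubic (cubic_pt t).
Proof. split; first exact: cpt_nz. by left; exists t; rewrite submx_refl. Qed.

Lemma on_cinf {F : fieldType} : on_cubic (cubic_inf F).
Proof. split; first exact: cinf_nz. by right; rewrite submx_refl. Qed.

Lemma AJAt {F : fieldType} (A : 'M[F]_4) i j : (A *m nullJ F *m A^T) i j = Mb A i j.
Proof.
rewrite mxE sum4 !mxE !sum4 !mxE /=.
rewrite /Mb; ring.
Qed.

Lemma MbN {F : fieldType} (a : 'I_4 -> 'I_4 -> F) i j : Mb a i j = - Mb a j i.
Proof. rewrite /Mb; ring. Qed.

Lemma Mbd {F : fieldType} (a : 'I_4 -> 'I_4 -> F) i : Mb a i i = 0.
Proof. rewrite /Mb; ring. Qed.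

Lemma Gq_polarity (F : finFieldType) (A : 'M[F]_4) : (5 <= #|F|)%N -> in_Gq A ->
  A *m nullJ F *m A^T = (- Mb A i0 i3) *: nullJ F.
Proof.
move=> F5 [Au HA].
have Hf k : (k < 3)%N -> forall t : F,
    hq A k 0 * t ^+ 6 + hq A k 1 * t ^+ 5 + hq A k 2 * t ^+ 4 + hq A k 3 * t ^+ 3
    + hq A k 4 * t ^+ 2 + hq A k 5 * t + hq A k 6 = 0.
  move=> k3 t; rewrite -Qpt //.
  have := oncQ ((HA (cubic_pt t)).1 (on_cpt t)) k.
  by rewrite !ptA.
have H0 k : (k < 3)%N -> hq A k 0 = 0.
  move=> k3; rewrite -Qinf //.
  have := oncQ ((HA (cubic_inf F)).1 on_cinf) k.
  by rewrite !infA.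
pose s := enum (predC1 (0 : F)).
have ss : (4 <= size s)%N by rewrite /s -cardE cardC1; case: #|F| F5.
have us : uniq (take 4 s) := take_uniq 4 (enum_uniq _).
have ms x : x \in take 4 s -> x != 0.
  by move/mem_take; rewrite mem_enum.
have st : size (take 4 s) = 4%N by rewrite size_takel.
move: us ms st; case: (take 4 s) => [|x1 [|x2 [|x3 [|x4 [|]]]]] // us ms _.
have n1 : x1 != 0 by apply: ms; rewrite !inE eqxx.
have n2 : x2 != 0 by apply: ms; rewrite !inE eqxx !orbT.
have n3 : x3 != 0 by apply: ms; rewrite !inE eqxx !orbT.
have n4 : x4 != 0 by apply: ms; rewrite !inE eqxx !orbT.
have [R06 R02 R03 R04 R05] := poly_rel us n1 n2 n3 n4 (H0 0%N erefl) (Hf 0%N erefl).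
have [R16 R12 R13 R14 R15] := poly_rel us n1 n2 n3 n4 (H0 1%N erefl) (Hf 1%N erefl).
have [R26 R22 R23 R24 R25] := poly_rel us n1 n2 n3 n4 (H0 2%N erefl) (Hf 2%N erefl).
have [L0 L1 L2 L3] := syz_conc (H0 0%N erefl) (H0 1%N erefl) (H0 2%N erefl)
  R02 R12 R22 R03 R13 R23 R04 R14 R24.
pose w : 'cV[F]_4 := \col_(j < 4) [:: hq A 1 1; - hq A 2 1; hq A 0 1; 0]`_j.
have Aw : A *m w = 0.
  apply/matrixP => i j; rewrite !mxE sum4 !mxE /=.
  case: (ord4P i) => ->.
  - by apply: (subst0 L0); rewrite /Lf; ring.
  - by apply: (subst0 L1); rewrite /Lf; ring.
  - by apply: (subst0 L2); rewrite /Lf; ring.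
  - by apply: (subst0 L3); rewrite /Lf; ring.
have w0 : w = 0 by rewrite -(mulKmx Au w) Aw mulmx0.
have C1 : hq A 1 1 = 0.
  by have := congr1 (fun M : 'cV[F]_4 => M i0 0) w0; rewrite !mxE /=.
have C2 : hq A 2 1 = 0.
  have := congr1 (fun M : 'cV[F]_4 => M i1 0) w0; rewrite !mxE /= => /eqP.
  by rewrite oppr_eq0 => /eqP.
have C0 : hq A 0 1 = 0.
  by have := congr1 (fun M : 'cV[F]_4 => M i2 0) w0; rewrite !mxE /=.
have Hz : forall k m, hq A k m = 0.
  move=> k m; case: k => [|[|[|k]]]; last by [].
  - case: m => [|[|[|[|[|[|[|m]]]]]]] //; rewrite ?H0 ?R02 ?R03 ?R04 ?R05 ?R06 ?C0 //; ring.
  - case: m => [|[|[|[|[|[|[|m]]]]]]] //; rewrite ?H0 ?R12 ?R13 ?R14 ?R15 ?R16 ?C1 //; ring.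
  - case: m => [|[|[|[|[|[|[|m]]]]]]] //; rewrite ?H0 ?R22 ?R23 ?R24 ?R25 ?R26 ?C2 //; ring.
have rowz (u : 'rV[F]_4) : u != 0 -> exists j, (u *m A) 0 j != 0.
  move=> un; case: (boolP [exists j, (u *m A) 0 j != 0]) => [/existsP //|/existsPn H].
  have : u *m A == 0.
    apply/eqP/matrixP => i j; rewrite (ord1 i) [RHS]mxE.
    by have := H j; rewrite negbK => /eqP.
  by rewrite mulmx_free_eq0 ?row_free_unit // (negbTE un).
have n0 : exists j, A i0 j != 0.
  by have [j] := rowz _ (@cinf_nz F); rewrite infA => h; exists j.
have n3' : exists j, A i3 j != 0.
  have [j] := rowz _ (cpt_nz (0 : F)); rewrite ptA.
  have -> : pt A 0 j = A i3 j by rewrite /pt; ring.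
  by move=> h; exists j.
have [E01 E23 E02 E13 EX] := alg_main Hz n0 n3'.
have E12 : Mb A i1 i2 = - (3%:R * Mb A i0 i3) by apply: (eq_of EX); ring.
apply/matrixP => i j; rewrite AJAt !mxE.
case: (ord4P i) => ->; case: (ord4P j) => -> /=;
rewrite ?[Mb A i1 i0]MbN ?[Mb A i2 i0]MbN ?[Mb A i3 i0]MbN ?[Mb A i2 i1]MbN
  ?[Mb A i3 i1]MbN ?[Mb A i3 i2]MbN ?Mbd ?E01 ?E23 ?E02 ?E13 ?E12; ring.
Qed.

Lemma three_nz (F : finFieldType) : ~~ (3 %| #|F|)%N -> (3%:R : F) != 0.
Proof.
move=> n3; apply/eqP => H; move/negP: n3; apply.
have p3 : (3%N \in [pchar F]) by rewrite inE /= H eqxx.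
have E : #|F| = (3 ^ logn 3 #|F|)%N := card_pprimeChar p3.
have := finNzRing_gt1 F. rewrite E.
case: (logn 3 #|F|) => [|n] //= _.
by rewrite expnS dvdn_mulr.
Qed.

Lemma J_unit (F : fieldType) : (3%:R : F) != 0 -> nullJ F \in unitmx.
Proof.
move=> n3.
pose Ji : 'M[F]_4 := \matrix_(i < 4, j < 4)
    (if ((i : nat) == 0%N) && ((j : nat) == 3%N) then 1
     else if ((i : nat) == 1%N) && ((j : nat) == 2%N) then - (3%:R)^-1
     else if ((i : nat) == 2%N) && ((j : nat) == 1%N) then (3%:R)^-1
     else if ((i : nat) == 3%N) && ((j : nat) == 0%N) then -1
     else 0).
have : nullJ F *m Ji = 1%:M.
  apply/matrixP => i j; rewrite mxE sum4 !mxE.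
  case: (ord4P i) => ->; case: (ord4P j) => -> /=; (try ring); field; exact: n3.
by case/mulmx1_unit.
Qed.

Lemma perp2 (F : fieldType) (J : 'M[F]_4) (Ju : J \in unitmx) k p
  (S : 'M[F]_(k, 4)) (X : 'M[F]_(p, 4)) :
  (kermx ((S *m J)^T) <= kermx ((X *m J)^T))%MS -> (X <= S)%MS.
Proof.
move=> sub.
pose N := col_mx S X.
have eN : (N *m J)^T = row_mx (S *m J)^T (X *m J)^T by rewrite /N mul_col_mx tr_col_mx.
have sKN : (kermx ((S *m J)^T) <= kermx ((N *m J)^T))%MS.
  rewrite sub_kermx eN mul_mx_row row_mx_eq0 -!sub_kermx submx_refl /=.
  exact: sub.
have rk q (M : 'M[F]_(q, 4)) : \rank (kermx ((M *m J)^T)) = (4 - \rank M)%N.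
  by rewrite mxrank_ker mxrank_tr mxrankMfree // row_free_unit.
have le := mxrankS sKN; rewrite !rk in le.
have SN : (S <= N)%MS by rewrite /N -addsmxE addsmxSl.
have XN : (X <= N)%MS by rewrite /N -addsmxE addsmxSr.
have NS : (N <= S)%MS.
  have [_ <-] := mxrank_leqif_sup SN.
  have := mxrankS SN; have := rank_leq_col S; have := rank_leq_col N.
  move: le; set a := \rank S; set b := \rank N => le h1 h2 h3.
  apply/eqP; lia.
exact: submx_trans XN NS.
Qed.

Lemma fix_of_sub (F : fieldType) (A : 'M[F]_4) (Au : A \in unitmx) k (M : 'M[F]_(k, 4)) :
  (M *m A <= M)%MS -> (M *m A == M)%MS.
Proof.
move=> s; have [_ <-] := mxrank_leqif_eq s.
by rewrite mxrankMfree ?row_free_unit.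
Qed.

Lemma main_equiv (F : fieldType) (J A : 'M[F]_4) (Ju : J \in unitmx) (Au : A \in unitmx) (mu : F)
  (hB : forall m p (Y : 'M[F]_(m, 4)) (X : 'M[F]_(p, 4)),
     Y *m A *m ((X *m A) *m J)^T = mu *: (Y *m (X *m J)^T))
  k (S : 'M[F]_(k, 4)) :
  (S *m A == S)%MS <-> (kermx ((S *m J)^T) *m A == kermx ((S *m J)^T))%MS.
Proof.
set K := kermx _.
split=> H.
- apply: fix_of_sub => //; rewrite sub_kermx.
  have /submxP [D eD] : (S <= S *m A)%MS by case/andP: H.
  have -> : (S *m J)^T = ((S *m A) *m J)^T *m D^T.
    by rewrite {1}eD -mulmxA trmx_mul.
  by rewrite mulmxA hB mulmx_ker scaler0 mul0mx.
- apply: fix_of_sub => //; apply: (perp2 Ju).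
  rewrite sub_kermx.
  have /submxP [D eD] : (K <= K *m A)%MS by case/andP: H.
  by rewrite -/K {1}eD -mulmxA hB mulmx_ker scaler0 mulmx0.
Qed.

Lemma fix_eq (F : fieldType) (A : 'M[F]_4) m1 m2 (X : 'M[F]_(m1, 4)) (Y : 'M[F]_(m2, 4)) :
  (X == Y)%MS -> (X *m A == X)%MS -> (Y *m A == Y)%MS.
Proof.
move=> /andP[xy yx] /andP[xax xxa]; apply/andP; split.
- exact: submx_trans (submxMr A yx) (submx_trans xax xy).
- exact: submx_trans yx (submx_trans xxa (submxMr A xy)).
Qed.

Lemma fix_eq_iff (F : fieldType) (A : 'M[F]_4) m1 m2 (X : 'M[F]_(m1, 4)) (Y : 'M[F]_(m2, 4)) :
  (X :=: Y)%MS -> (X *m A == X)%MS = (Y *m A == Y)%MS.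
Proof.
move=> e; have /eqmxP eXY := e.
have eYX : (Y == X)%MS by apply/eqmxP; apply: eqmx_sym.
by apply/idP/idP; [apply: fix_eq eXY | apply: fix_eq eYX].
Qed.

Unset Implicit Arguments.
Unset Strict Implicit.

Theorem lemma4p3 (F : finFieldType) (P1 P2 : 'rV[F]_4) :
  (5 <= #|F|)%N -> ~~ (3 %| #|F|)%N ->
  P1 != 0 -> P2 != 0 -> ~~ (P1 == P2)%MS ->
  forall A : 'M[F]_4, in_Gq A ->
    (fixes_sub A (line_through P1 P2) <-> fixes_sub A (polar_line P1 P2)).
Proof.
move=> F5 F3 _ _ _ A GA.
have Ju := J_unit (three_nz F3).
have Au := GA.1.
have HP := Gq_polarity F5 GA.
set mu := - Mb A i0 i3 in HP.
set J := nullJ F in HP Ju *.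
have HT : A *m J^T *m A^T = mu *: J^T.
  have := congr1 trmx HP; rewrite !trmx_mul trmxK => E.
  rewrite -mulmxA E; apply/matrixP => i j; by rewrite !mxE.
have HT' (q : nat) (Z : 'M[F]_(4, q)) : A *m (J^T *m (A^T *m Z)) = mu *: (J^T *m Z).
  by rewrite mulmxA mulmxA HT -scalemxAl.
have hB : forall m p (Y : 'M[F]_(m, 4)) (X : 'M[F]_(p, 4)),
    Y *m A *m ((X *m A) *m J)^T = mu *: (Y *m (X *m J)^T).
  move=> m p Y X; rewrite !trmx_mul -!mulmxA HT' -scalemxAr.
  by [].
pose S := col_mx P1 P2.
have eL : (P1 + P2 :=: S)%MS := addsmxE P1 P2.
have gen (Kx : 'M[F]_4) : Kx *m (S *m J)^T == 0 ->
    (Kx *m (P1 *m J)^T == 0) && (Kx *m (P2 *m J)^T == 0).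
  by rewrite /S mul_col_mx tr_col_mx mul_mx_row row_mx_eq0.
have eL' : (polar_plane P1 :&: polar_plane P2 :=: kermx ((S *m J)^T))%MS.
  apply/eqmxP/andP; split.
  - rewrite sub_kermx /S mul_col_mx tr_col_mx mul_mx_row row_mx_eq0 -!sub_kermx.
    by rewrite /polar_plane -/J capmxSl capmxSr.
  - rewrite sub_capmx /polar_plane -/J !sub_kermx; apply: gen.
    by rewrite mulmx_ker.
rewrite /fixes_sub /line_through /polar_line.
rewrite (fix_eq_iff A eL) (fix_eq_iff A eL').
apply: (main_equiv Ju Au hB S).
Qed.
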